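(* If $\mathcal D$ is a probabilistic database with the finite moments property and $\Phi$ is an FO-view over the schema of $\mathcal D$, then $\Phi(\mathcal D)$ also has the finite moments property.
   Context: Fix a countably infinite universe $U$. A database schema is a finite nonempty set of relation symbols with arities; facts are $R(u_1,\dots,u_{\mathrm{ar}(R)})$ with $u_i\in U$; an instance is a finite set of facts ($|D|$ = number of facts); $\mathrm{adom}(D)$ is the set of elements of $U$ occurring in $D$. A probabilistic database (PDB) is a discrete probability space $(\mathbb D,P)$ with $\mathbb D$ a nonempty countable set of instances. It has the finite moments property if $\sum_{D\in\mathbb D}|D|^kP(\{D\})<\infty$ for all $k\in\mathbb N_+$. An FO-view consists of one first-order formula $\Phi_R(x_1,\dots,x_{\mathrm{ar}(R)})$ (constants from $U$ allowed) per output relation symbol $R$, evaluated under active domain semantics (quantifiers range over $\mathrm{adom}(D)$ and the formula's constants), mapping $D$ to the instance containing $R(\bar a)$ for all $\bar a$ over $\mathrm{adom}(D)\cup\mathrm{adom}(\Phi_R)$ with $D\models\Phi_R[\bar a]$. The image $\Phi(\mathcal D)$ of a PDB $(\mathbb D,P)$ is the PDB on $\Phi(\mathbb D)$ with $P'(\{D'\})=P(\{D:\Phi(D)=D'\})$. *)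

(* Defs.v *)
From HB Require Import structures.
From mathcomp Require Import all_boot all_order all_algebra finmap.
From mathcomp Require Import all_classical all_reals all_analysis.

Set Implicit Arguments.
Unset Strict Implicit.
Unset Printing Implicit Defensive.

Import Order.TTheory GRing.Theory Num.Theory.

(* The universe U is fixed to be nat (a countably infinite set). *)

Record schema := Schema { sym : finType; ar : sym -> nat }.

Definition fact (S : schema) : Type := {R : sym S & (ar R).-tuple nat}.

Definition inst (S : schema) : Type := {fset fact S}.

Definition inst_size (S : schema) (D : inst S) : nat := #|` D|.

Definition adom (S : schema) (D : inst S) : seq nat :=
  flatten [seq tval (tagged f) | f <- enum_fset D].

Inductive term := TVar of nat | TConst of nat.

Inductive formula (S : schema) :=
  | FAtom (R : sym S) of (ar R).-tuple term
  | FEq of term & term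
  | FTrue
  | FFalse
  | FNot of formula S
  | FAnd of formula S & formula S
  | FOr of formula S & formula S
  | FImp of formula S & formula S
  | FExists of nat & formula S
  | FForall of nat & formula S.

Arguments FTrue {S}.
Arguments FFalse {S}.

Definition term_vars (t : term) : seq nat :=
  match t with TVar i => [:: i] | TConst _ => [::] end.
Definition term_consts (t : term) : seq nat :=
  match t with TVar _ => [::] | TConst c => [:: c] end.

Fixpoint fv (S : schema) (f : formula S) : seq nat :=
  match f with
  | FAtom _ ts => flatten [seq term_vars t | t <- tval ts]
  | FEq t1 t2 => term_vars t1 ++ term_vars t2
  | FTrue | FFalse => [::]
  | FNot g => fv g
  | FAnd g h | FOr g h | FImp g h => fv g ++ fv h
  | FExists x g | FForall x g => [seq y <- fv g | y != x]
  end.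

Fixpoint consts (S : schema) (f : formula S) : seq nat :=
  match f with
  | FAtom _ ts => flatten [seq term_consts t | t <- tval ts]
  | FEq t1 t2 => term_consts t1 ++ term_consts t2
  | FTrue | FFalse => [::]
  | FNot g => consts g
  | FAnd g h | FOr g h | FImp g h => consts g ++ consts h
  | FExists _ g | FForall _ g => consts g
  end.

Definition teval (e : nat -> nat) (t : term) : nat :=
  match t with TVar i => e i | TConst c => c end.

Definition upd (e : nat -> nat) (x u : nat) : nat -> nat :=
  fun y => if y == x then u else e y.

Fixpoint sat (S : schema) (A : seq nat) (D : inst S) (e : nat -> nat)
    (f : formula S) : bool :=
  match f with
  | FAtom R ts =>
      (existT (fun R0 : sym S => (ar R0).-tuple nat) R (map_tuple (teval e) ts)
        : fact S) \in D
  | FEq t1 t2 => teval e t1 == teval e t2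
  | FTrue => true
  | FFalse => false
  | FNot g => ~~ sat A D e g
  | FAnd g h => sat A D e g && sat A D e h
  | FOr g h => sat A D e g || sat A D e h
  | FImp g h => sat A D e g ==> sat A D e h
  | FExists x g => has (fun u => sat A D (upd e x u) g) A
  | FForall x g => all (fun u => sat A D (upd e x u) g) A
  end.

(* Active-domain satisfaction: quantifiers range over adom(D) and the
   constants of the formula. *)
Definition adom_dom (S : schema) (D : inst S) (f : formula S) : seq nat :=
  adom D ++ consts f.

Fixpoint tuples_over (A : seq nat) (n : nat) : seq (n.-tuple nat) :=
  match n with
  | 0 => [:: [tuple]]
  | n'.+1 => [seq cons_tuple a t | a <- A, t <- tuples_over A n']
  end.

(* assignment x_{i+1} |-> t_i (variables are numbered from 0) *)
Definition env_of (n : nat) (t : n.-tuple nat) : nat -> nat := fun i => nth 0 t i.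

Record fo_view (S S' : schema) := FOView {
  phi : forall R' : sym S', formula S;
  phi_fv : forall R' : sym S', all (fun i => i < ar R') (fv (phi R'))
}.

Definition view_facts (S S' : schema) (Phi : fo_view S S') (D : inst S)
    (R' : sym S') : seq (fact S') :=
  [seq existT (fun R0 : sym S' => (ar R0).-tuple nat) R' t
  | t <- tuples_over (adom_dom D (phi Phi R')) (ar R')
  & sat (adom_dom D (phi Phi R')) D (env_of t) (phi Phi R')].

Definition apply_view (S S' : schema) (Phi : fo_view S S') (D : inst S) : inst S' :=
  [fset x | x in flatten [seq view_facts Phi D R' | R' <- enum (sym S')]]%fset.

Local Open Scope classical_set_scope.
Local Open Scope ring_scope.
Local Open Scope ereal_scope.

(* A PDB given by its probability mass function on (countably many) instances *)
Definition is_pdb (R : realType) (S : schema) (P : inst S -> R) : Prop :=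
  (forall D, (0 <= P D)%R) /\ \esum_(D in [set: inst S]) (P D)%:E = 1.

Definition finite_moments (R : realType) (S : schema) (p : inst S -> \bar R) : Prop :=
  forall k : nat, (0 < k)%N ->
    \esum_(D in [set: inst S]) ((inst_size D ^ k)%:R)%:E * p D < +oo.

Definition image_pmf (R : realType) (S S' : schema) (Phi : fo_view S S')
    (P : inst S -> R) : inst S' -> \bar R :=
  fun D' => \esum_(D in [set D | apply_view Phi D = D']) (P D)%:E.

(* Main.v *)
Require Import Defs.
From HB Require Import structures.
From mathcomp Require Import all_boot all_order all_algebra finmap.
From mathcomp Require Import all_classical all_reals all_analysis.
From mathcomp Require Import zify ring.

Lemma expn_mono (e a b : nat) : (a <= b)%N -> (a ^ e <= b ^ e)%N.
Proof. by move=> ab; elim: e => // e IH; rewrite !expnS leq_mul. Qed.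

Lemma sumn_map_le (T : Type) (f : T -> nat) (s : seq T) (b : nat) :
  (forall x, f x <= b)%N -> (sumn (map f s) <= size s * b)%N.
Proof. by move=> H; elim: s => //= x s IH; rewrite mulSn leq_add. Qed.

Lemma size_tuples_over (A : seq nat) n : size (tuples_over A n) = (size A ^ n)%N.
Proof. by elim: n => //= n IH; rewrite size_allpairs IH expnS. Qed.

Section Bound.
Variables (S S' : schema) (Phi : fo_view S S').

Definition amax := (\max_(R : sym S) ar R)%N.
Definition mmax := (\max_(R : sym S') ar R)%N.
Definition cmax := (\max_(R : sym S') size (consts (phi Phi R)))%N.

Lemma size_adom (D : inst S) : (size (adom D) <= amax * #|` D|)%N.
Proof.
rewrite /adom size_flatten /shape -map_comp mulnC.
apply: sumn_map_le => f /=; rewrite size_tuple.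
by apply: (@leq_bigmax _ (fun R => ar R)).
Qed.

Lemma size_view_facts (D : inst S) R' :
  (size (view_facts Phi D R') <= (amax * #|` D| + cmax).+1 ^ mmax)%N.
Proof.
rewrite /view_facts size_map size_filter (leq_trans (count_size _ _)) //.
rewrite size_tuples_over.
apply: (@leq_trans ((amax * #|` D| + cmax).+1 ^ ar R')).
  apply: expn_mono; rewrite /adom_dom size_cat; apply: leqW; rewrite leq_add ?size_adom //.
  by apply: (@leq_bigmax _ (fun R => size (consts (phi Phi R)))).
by apply: leq_pexp2l => //; apply: (@leq_bigmax _ (fun R => ar R)).
Qed.

Lemma size_apply_view (D : inst S) :
  (#|` apply_view Phi D| <= #|sym S'| * (amax * #|` D| + cmax).+1 ^ mmax)%N.
Proof.
rewrite /apply_view card_fseq (leq_trans (size_undup _)) // size_flatten /shape -map_comp.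
rewrite cardE.
by apply: sumn_map_le => R' /=; apply: size_view_facts.
Qed.

Definition Cst k := ((#|sym S'| * (amax + cmax).+1 ^ mmax) ^ k * 2 ^ (mmax * k).+1)%N.
Lemma key_bound (D : inst S) (k : nat) :
  (#|` apply_view Phi D| ^ k <= Cst k * (#|` D| ^ (mmax * k).+1 + 1))%N.
Proof.
set d := #|` D|; set j := (mmax * k).+1.
have h1 : (#|` apply_view Phi D| <= #|sym S'| * (amax + cmax).+1 ^ mmax * d.+1 ^ mmax)%N.
  rewrite (leq_trans (size_apply_view D)) // -mulnA leq_mul2l -expnMn.
  apply/orP; right; apply: expn_mono; nia.
apply: (@leq_trans ((#|sym S'| * (amax + cmax).+1 ^ mmax) ^ k * d.+1 ^ j)).
  rewrite (leq_trans (@expn_mono k _ _ h1)) // expnMn -expnM leq_mul2l; apply/orP; right.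
  by apply: leq_pexp2l.
rewrite /Cst -mulnA leq_mul2l; apply/orP; right.
clear h1; rewrite -/j; clearbody d; case: d => [|d].
  by rewrite exp1n exp0n // add0n muln1 expn_gt0.
rewrite mulnDr muln1 -expnMn (leq_trans _ (leq_addr _ _)) //.
by apply: expn_mono; nia.
Qed.
End Bound.
Import Order.TTheory GRing.Theory Num.Theory.
Local Open Scope classical_set_scope.
Local Open Scope ring_scope.
Local Open Scope ereal_scope.

Lemma esumZnat (R : realType) (T : choiceType) (I : set T) (a : T -> \bar R) (n : nat) :
  (forall i, I i -> 0 <= a i) ->
  \esum_(i in I) (n%:R%:E * a i) = n%:R%:E * \esum_(i in I) a i.
Proof.
move=> a0.
have E : forall x : \bar R, n%:R%:E * x = \sum_(j <- iota 0 n) x.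
  move=> x; rewrite mule_natl; elim: n {a0} => [|n IH]; first by rewrite big_nil.
  rewrite -addn1 iotaD big_cat /= big_seq1 -IH /=. change ((x *+ (n + 1))%R = (x *+ n)%R + x). by rewrite addn1 mulrSr.
rewrite E -esum_sum; last by move=> *; exact: a0.
by apply: eq_esum => i _; rewrite E.
Qed.

Theorem lemma3p5 (R : realType) (S S' : schema)
  (HS : (0 < #|sym S|)%N) (HS' : (0 < #|sym S'|)%N)
  (P : inst S -> R) (HP : is_pdb P) (Phi : fo_view S S') :
  finite_moments (fun D => (P D)%:E) ->
  finite_moments (image_pmf Phi P).
Proof.
move=> FM k k0; case: HP => P0 P1.
have E : \esum_(D' in [set: inst S']) ((inst_size D' ^ k)%:R)%:E * image_pmf Phi P D'
  = \esum_(D in [set: inst S]) ((#|` apply_view Phi D| ^ k)%:R)%:E * (P D)%:E.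
  rewrite /image_pmf.
  rewrite (@eq_esum _ _ _ _ (fun D' => \esum_(D in [set D | apply_view Phi D = D'])
     ((#|` apply_view Phi D| ^ k)%:R)%:E * (P D)%:E)); last first.
    move=> D' _; rewrite -esumZnat; last by move=> D _; rewrite lee_fin.
    by apply: eq_esum => D /= ->.
  rewrite esum_esum; last by move=> D' D _ _; rewrite -EFinM lee_fin mulr_ge0.
  rewrite (reindex_esum [set: inst S] _ (fun D => (apply_view Phi D, D))) //.
  split.
  - by move=> D _; split.
  - by move=> D1 D2 _ _ [].
  - by move=> [D' D] [_ /= <-]; exists D.
rewrite E; set j := (mmax S' * k).+1.
apply: (@le_lt_trans _ _ (\esum_(D in [set: inst S]) (((@Cst S S' Phi k))%:R%:E *
   ((((#|` D| ^ j)%:R)%:E * (P D)%:E) + (P D)%:E)))).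
  apply: le_esum => D _; rewrite -EFinM -EFinD -EFinM lee_fin.
  have H : ((#|` apply_view Phi D| ^ k)%:R <= ((@Cst S S' Phi k) * (#|` D| ^ j + 1))%:R :> R)%R.
    by rewrite ler_nat key_bound.
  have -> : (((@Cst S S' Phi k))%:R * ((#|` D| ^ j)%:R * P D + P D) =
     ((@Cst S S' Phi k) * (#|` D| ^ j + 1))%:R * P D :> R)%R.
    by rewrite natrM natrD; ring.
  by apply: ler_wpM2r.
rewrite esumZnat; last by move=> D _; rewrite -EFinM -EFinD lee_fin addr_ge0 ?mulr_ge0.
rewrite esumD; last 2 first.
- by move=> D _; rewrite -EFinM lee_fin mulr_ge0.
- by move=> D _; rewrite lee_fin.
rewrite P1; apply: lte_mul_pinfty => //.
apply: lte_add_pinfty; last exact: ltry.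
exact: (FM j).
Qed.
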